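(* For every $n\equiv 1 \pmod{16}$ with $n\geq 17$, there exists an almost 2-perfect 8-cycle system of order $n$.
   Context: An 8-cycle system of order $n$ is a collection of pairwise edge-disjoint 8-cycles partitioning the edge set of $K_n$. For an 8-cycle $C$, an inside 8-cycle of $C$ is an 8-cycle on the same vertex set as $C$ sharing no edge with $C$. An 8-cycle system $\mathcal{C}$ is almost 2-perfect if one can choose, for each $C\in\mathcal{C}$, an inside 8-cycle $C'$ of $C$ so that the chosen cycles again form an 8-cycle system of order $n$. *)

(* Defs.v *)
(* Vertices of K_n are 'I_n; an edge is a 2-element set of
   vertices; a cycle is represented by its edge set. *)
From HB Require Import structures.
From mathcomp Require Import all_boot.
Set Implicit Arguments. Unset Strict Implicit. Unset Printing Implicit Defensive.

Section Cycles.
Variable n : nat.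
Local Notation V := 'I_n.

Definition Kn_edges : {set {set V}} := [set e : {set V} | #|e| == 2].

Definition walk_edges (c : 8.-tuple V) : {set {set V}} :=
  [set [set tnth c i; tnth c (ordS i)] | i : 'I_8].

Definition is_8cycle (C : {set {set V}}) : Prop :=
  exists c : 8.-tuple V, uniq c /\ C = walk_edges c.

Definition cycle_vertices (C : {set {set V}}) : {set V} := cover C.

Definition is_8cycle_system (S : {set {set {set V}}}) : Prop :=
  (forall C, C \in S -> is_8cycle C) /\ partition S Kn_edges.

Definition inside_8cycle (C C' : {set {set V}}) : Prop :=
  is_8cycle C' /\ cycle_vertices C' = cycle_vertices C /\ C :&: C' = set0.

Definition almost_2_perfect (S : {set {set {set V}}}) : Prop :=
  is_8cycle_system S /\
  exists f : {set {set V}} -> {set {set V}},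
    (forall C, C \in S -> inside_8cycle C (f C)) /\
    {in S &, injective f} /\
    is_8cycle_system [set f C | C in S].

End Cycles.

(* Main.v *)
Require Import Defs.
From mathcomp Require Import all_boot.
From mathcomp Require Import all_algebra zify.
Set Implicit Arguments. Unset Strict Implicit. Unset Printing Implicit Defensive.
Import GRing.Theory.

Module FrameM.
Local Open Scope ring_scope.

Lemma set2_eq (T : finType) (a b a' b' : T) :
  [set a; b] = [set a'; b'] -> (a = a' /\ b = b') \/ (a = b' /\ b = a').
Proof.
move=> H.
have Ha : a \in [set a'; b'] by rewrite -H set21.
have Hb : b \in [set a'; b'] by rewrite -H set22.
have Ha' : a' \in [set a; b] by rewrite H set21.
have Hb' : b' \in [set a; b] by rewrite H set22.
case/set2P: Ha => Ea; case/set2P: Hb => Eb; subst.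
- by case/set2P: Hb' => ->; left.
- by left.
- by right.
- by case/set2P: Ha' => ->; right.
Qed.

Lemma ordS_neq (r : 'I_8) : ordS r != r.
Proof. by case: r => [[|[|[|[|[|[|[|[|r]]]]]]]] Hr]. Qed.

Lemma uniq_mktuple (T : eqType) (f : 'I_8 -> T) :
  injective f -> uniq [tuple f r | r < 8].
Proof. by move=> fi; apply/tuple_uniqP => x y; rewrite !tnth_mktuple => /fi. Qed.

Lemma cover_walk (n : nat) (c : 8.-tuple 'I_n) :
  cover (walk_edges c) = [set tnth c r | r : 'I_8].
Proof.
apply/setP => x; apply/bigcupP/imsetP.
- case=> e /imsetP [r _ ->] /set2P [->|->]; first by exists r.
  by exists (ordS r).
- case=> r _ ->; exists [set tnth c r; tnth c (ordS r)]; last by rewrite set21.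
  by apply/imsetP; exists r.
Qed.

Lemma addKD (V : zmodType) (i x y : V) : (i + y) - (i + x) = y - x.
Proof. by rewrite opprD addrACA subrr add0r. Qed.

Lemma shift_eq (V : zmodType) (x v v' : V) : x - v + v' = (v' - v) + x.
Proof. by rewrite addrC addrCA addrC. Qed.

Section Frame.
Variable m : nat.
Local Notation G := 'I_m.+1.
Variable L : finType.
Variable vert : L -> 'I_8 -> G.
Hypothesis vert_inj : forall l, injective (vert l).

Definition cyc (p : 8.-tuple 'I_8) (i : G) (l : L) : 8.-tuple G :=
  [tuple (i + vert l (tnth p r))%R | r < 8].
Definition Cyc p i l := walk_edges (cyc p i l).
Definition dlt (p : 8.-tuple 'I_8) l (r : 'I_8) := (vert l (tnth p (ordS r)) - vert l (tnth p r))%R.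

Definition fam_ok (p : 8.-tuple 'I_8) :=
  [/\ uniq p,
   (forall l r l' r', dlt p l r = dlt p l' r' -> l = l' /\ r = r'),
   (forall l r l' r', dlt p l r <> (- dlt p l' r')%R) &
   (forall g : G, g <> 0%R -> exists l r, g = dlt p l r \/ g = (- dlt p l r)%R)].

Section Fam.
Variable p : 8.-tuple 'I_8.
Hypothesis okp : fam_ok p.

Lemma cp_inj l : injective (fun r => vert l (tnth p r)).
Proof.
case: okp => up _ _ _ x y /vert_inj; exact: (tuple_uniqP _ up).
Qed.

Lemma mem_Cyc e (i : G) l : e \in Cyc p i l <->
  exists r, e = [set (i + vert l (tnth p r))%R; (i + vert l (tnth p (ordS r)))%R].
Proof.
split.
- by case/imsetP => r _ ->; exists r; rewrite !tnth_mktuple.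
- by case=> r ->; apply/imsetP; exists r; rewrite ?tnth_mktuple.
Qed.

Lemma edge_uniq (i : G) l r (i' : G) l' r' :
  [set (i + vert l (tnth p r))%R; (i + vert l (tnth p (ordS r)))%R] =
  [set (i' + vert l' (tnth p r'))%R; (i' + vert l' (tnth p (ordS r')))%R] ->
  [/\ i = i', l = l' & r = r'].
Proof.
case: okp => _ Hinj Hanti _.
case/set2_eq => [[E1 E2]|[E1 E2]].
- have : dlt p l r = dlt p l' r'.
    by rewrite /dlt -(addKD i) E1 E2 addKD.
  case/Hinj => El Er; subst l' r'; split => //.
  by move/addIr: E1.
- exfalso; apply: (Hanti l r l' r').
  by rewrite /dlt -(addKD i) E1 E2 addKD opprB.
Qed.

Lemma Cyc_inj i l i' l' : Cyc p i l = Cyc p i' l' -> i = i' /\ l = l'.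
Proof.
move=> E.
have : [set (i + vert l (tnth p ord0))%R; (i + vert l (tnth p (ordS ord0)))%R]
   \in Cyc p i' l' by rewrite -E; apply/mem_Cyc; exists ord0.
by case/mem_Cyc => r' /edge_uniq [].
Qed.

Lemma edge_in_Kn (i : G) l r :
  [set (i + vert l (tnth p r))%R; (i + vert l (tnth p (ordS r)))%R] \in Kn_edges m.+1.
Proof.
rewrite inE cards2.
have -> // : i + vert l (tnth p r) != i + vert l (tnth p (ordS r)).
apply/negP => /eqP /addrI /cp_inj /eqP.
by rewrite eq_sym (negbTE (ordS_neq r)).
Qed.

Lemma edge_exists e : e \in Kn_edges m.+1 ->
  exists (i : G) l r, e = [set (i + vert l (tnth p r))%R; (i + vert l (tnth p (ordS r)))%R].
Proof.
case: okp => _ _ _ Hsurj.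
rewrite inE => /cards2P [x [y [xy ->]]].
have : (y - x)%R <> 0%R by move/eqP; rewrite subr_eq0 eq_sym (negbTE xy).
case/Hsurj => l [r [E|E]].
- exists (x - vert l (tnth p r))%R, l, r.
  have -> : x - vert l (tnth p r) + vert l (tnth p r) = x by rewrite subrK.
  have -> : x - vert l (tnth p r) + vert l (tnth p (ordS r)) = y.
    by rewrite shift_eq -/(dlt p l r) -E subrK.
  by [].
- exists (y - vert l (tnth p r))%R, l, r.
  have -> : y - vert l (tnth p r) + vert l (tnth p r) = y by rewrite subrK.
  have -> : y - vert l (tnth p r) + vert l (tnth p (ordS r)) = x.
    by rewrite shift_eq -/(dlt p l r) -[dlt p l r]opprK -E opprB subrK.
  by rewrite setUC.
Qed.

Definition Sys := [set Cyc p x.1 x.2 | x : G * L].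

Lemma Cyc_8cycle i l : is_8cycle (Cyc p i l).
Proof.
exists (cyc p i l); split => //.
by apply: uniq_mktuple => x y /addrI /cp_inj.
Qed.

Lemma Sys_ok : is_8cycle_system Sys.
Proof.
split.
- by move=> C /imsetP [x _ ->]; apply: Cyc_8cycle.
apply/and3P; split.
- apply/eqP/setP => e; apply/bigcupP/idP.
  + case=> C /imsetP [x _ ->] /mem_Cyc [r ->]; exact: edge_in_Kn.
  + case/edge_exists => i [l [r ->]]; exists (Cyc p i l).
      by apply/imsetP; exists (i, l).
    by apply/mem_Cyc; exists r.
- apply/trivIsetP => A B /imsetP [x _ ->] /imsetP [y _ ->] Hne.
  rewrite -setI_eq0; apply/eqP/setP => e; rewrite inE in_set0.
  apply/negP => /andP [/mem_Cyc [r Er] /mem_Cyc [r' Er']].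
  move: Er'; rewrite Er => /edge_uniq [Ei El _].
  by move: Hne; rewrite Ei El eqxx.
- apply/negP => /imsetP [x _ E].
  have : [set (x.1 + vert x.2 (tnth p ord0))%R; (x.1 + vert x.2 (tnth p (ordS ord0)))%R]
     \in Cyc p x.1 x.2 by apply/mem_Cyc; exists ord0.
  by rewrite -E in_set0.
Qed.

Lemma vertsE (i : G) l :
  cycle_vertices (Cyc p i l) = [set i + vert l s | s : 'I_8].
Proof.
case: okp => up _ _ _.
rewrite /cycle_vertices /Cyc cover_walk.
have [g gK Kg] := injF_bij (tuple_uniqP _ up).
apply/setP => z; apply/imsetP/imsetP.
- by case=> r _ ->; exists (tnth p r); rewrite ?tnth_mktuple.
- by case=> s _ ->; exists (g s); rewrite ?tnth_mktuple ?Kg.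
Qed.

End Fam.

Section Both.
Variables p q : 8.-tuple 'I_8.
Hypothesis okp : fam_ok p.
Hypothesis okq : fam_ok q.
Hypothesis disj : forall r r' : 'I_8,
  ~ ((tnth p r = tnth q r' /\ tnth p (ordS r) = tnth q (ordS r')) \/
     (tnth p r = tnth q (ordS r') /\ tnth p (ordS r) = tnth q r')).

Definition fsel (C : {set {set G}}) : {set {set G}} :=
  if [pick x : G * L | C == Cyc p x.1 x.2] is Some x then Cyc q x.1 x.2 else set0.

Lemma fselE (i : G) l : fsel (Cyc p i l) = Cyc q i l.
Proof.
rewrite /fsel; case: pickP => [x /eqP E | H].
- by case: (Cyc_inj okp E) => <- <-.
- by move: (H (i, l)); rewrite eqxx.
Qed.

Lemma inside_ok (i : G) l : inside_8cycle (Cyc p i l) (Cyc q i l).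
Proof.
split; first exact: Cyc_8cycle.
split; first by rewrite !vertsE.
apply/setP => e; rewrite inE in_set0; apply/negP.
case/andP => /mem_Cyc [r ->] /mem_Cyc [r' /set2_eq E].
apply: (@disj r r').
by case: E => [[/addrI /vert_inj E1 /addrI /vert_inj E2]|[/addrI /vert_inj E1 /addrI /vert_inj E2]];
  [left|right].
Qed.

Lemma frame_main : exists S : {set {set {set G}}}, almost_2_perfect S.
Proof.
exists (Sys p); split; first exact: Sys_ok.
exists fsel; split; [|split].
- by move=> C /imsetP [x _ ->]; rewrite fselE; apply: inside_ok.
- move=> C1 C2 /imsetP [x _ ->] /imsetP [y _ ->]; rewrite !fselE.
  by case/(Cyc_inj okq) => -> ->.
- have -> : [set fsel C | C in Sys p] = Sys q.
    rewrite /Sys -imset_comp; apply: eq_imset => x /=; exact: fselE.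
  exact: Sys_ok.
Qed.

End Both.
End Frame.

End FrameM.
Import FrameM.

Module GenM.

Section Gen.
Variable k : nat.
Hypothesis k2 : 1 < k.
Local Notation N := (16 * k).+1.
Local Notation G := 'I_N.

Definition sig (j : nat) := if j.+1 < k then j.+1 else 0.

Lemma sig_lt j : j < k -> sig j < k.
Proof. rewrite /sig; case: ifP => //; lia. Qed.
Lemma sig_neq j : j < k -> sig j != j.
Proof. rewrite /sig; case: ifP => //; lia. Qed.
Lemma sig_inj j j' : j < k -> j' < k -> sig j = sig j' -> j = j'.
Proof. rewrite /sig; case: ifP; case: ifP; lia. Qed.
Lemma sig_surj b : b < k -> exists2 j, j < k & sig j = b.
Proof.
move=> bk; case: b bk => [|b] bk.
- exists k.-1; first lia. rewrite /sig; case: ifP; lia.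
- exists b; first lia. rewrite /sig; case: ifP; lia.
Qed.

Definition Fv (s j : nat) : nat :=
  nth 0 [:: 0; 1; 8*j+2; 8*j+4; 8*sig j+2; 8*sig j+4;
            8*j + 8*sig j + 9; 8*j + 8*sig j + 10] s.

Definition vertG (j : 'I_k) (s : 'I_8) : G := inZp (Fv s j).

Lemma inZpD a b : inZp (a + b) = (inZp a + inZp b)%R :> G.
Proof. by apply: val_inj; rewrite /= modnDm. Qed.

Lemma val_inZp x : x < N -> nat_of_ord (inZp x : G) = x.
Proof. by move=> xN; rewrite /= modn_small. Qed.

Lemma inZp_inj x y : x < N -> y < N -> inZp x = inZp y :> G -> x = y.
Proof. by move=> xN yN /(congr1 (@nat_of_ord N)); rewrite !val_inZp. Qed.

Lemma val_oppZp x : 0 < x < N -> nat_of_ord (- (inZp x : G))%R = N - x.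
Proof.
move=> /andP [x0 xN].
rewrite /= (modn_small xN) modn_small //; lia.
Qed.

Lemma small_anti D D' : 0 < D <= 8 * k -> 0 < D' <= 8 * k ->
  (inZp D : G) <> (- inZp D')%R.
Proof.
move=> HD HD' /(congr1 (@nat_of_ord N)); rewrite val_inZp ?val_oppZp //; lia.
Qed.

Lemma small_inj D D' : 0 < D <= 8 * k -> 0 < D' <= 8 * k ->
  (inZp D : G) = inZp D' -> D = D'.
Proof. move=> HD HD'; apply: inZp_inj; lia. Qed.

Lemma Fv_lt (s : 'I_8) j : j < k -> Fv s j < N.
Proof.
move=> jk; have sk := sig_lt jk.
case: s => [[|[|[|[|[|[|[|[|//]]]]]]]] Hs]; rewrite /Fv /=; lia.
Qed.

Lemma vertG_inj j : injective (vertG j).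
Proof.
move=> s s' /inZp_inj E.
have jk := ltn_ord j; have sk := sig_lt jk; have sn := sig_neq jk.
have {}E := E (Fv_lt s jk) (Fv_lt s' jk).
apply: val_inj; move: E.
case: s => [[|[|[|[|[|[|[|[|//]]]]]]]] Hs];
case: s' => [[|[|[|[|[|[|[|[|//]]]]]]]] Hs'] /=;
rewrite /Fv /=; lia.
Qed.

Section GFam.
Variables (p : 8.-tuple 'I_8) (sg ty : 'I_8 -> bool) (ofs : 'I_8 -> nat).
Hypothesis up : uniq p.
Hypothesis ofs_rng : forall r, 0 < ofs r <= 8.
Hypothesis ofs_inj : injective ofs.
Hypothesis ofs_surj : forall o, 0 < o <= 8 -> exists r, ofs r = o.
Definition Dv (j : nat) r := 8 * (if ty r then j else sig j) + ofs r.
Hypothesis Hstep : forall (j : nat) r, j < k ->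
  if sg r then Fv (tnth p (ordS r)) j = Fv (tnth p r) j + Dv j r
  else Fv (tnth p r) j = Fv (tnth p (ordS r)) j + Dv j r.

Lemma Dv_rng j r : j < k -> 0 < Dv j r <= 8 * k.
Proof.
move=> jk; have sk := sig_lt jk; have := ofs_rng r.
rewrite /Dv; case: (ty r); lia.
Qed.

Lemma dltE (j : 'I_k) r :
  dlt vertG p j r = if sg r then inZp (Dv j r) else (- inZp (Dv j r))%R.
Proof.
have := Hstep r (ltn_ord j); rewrite /dlt /vertG.
case: (sg r) => ->; rewrite inZpD.

- by rewrite addrAC subrr add0r.
- by rewrite opprD addrA subrr add0r.
Qed.

Lemma tile_inj (j j' : 'I_k) r r' : Dv j r = Dv j' r' -> j = j' /\ r = r'.
Proof.
have jk := ltn_ord j; have jk' := ltn_ord j'.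
have sk := sig_lt jk; have sk' := sig_lt jk'.
have := ofs_rng r; have := ofs_rng r'.
rewrite /Dv => H1 H2 E.
have Eo : ofs r = ofs r' by move: E; case: (ty r); case: (ty r'); lia.
have Er := ofs_inj Eo; subst r'; split => //.
apply: ord_inj; move: E; case: (ty r) => E.
- lia.
- apply: sig_inj => //; lia.
Qed.

Lemma tile_surj D : 0 < D <= 8 * k -> exists (j : 'I_k) r, Dv j r = D.
Proof.
move=> HD.
have Hdiv := divn_eq D.-1 8; have Ho := ltn_pmod D.-1 (isT : 0 < 8).
move: Hdiv Ho; set b := D.-1 %/ 8; set o := D.-1 %% 8 => Hdiv Ho.
have [r Hr] : exists r, ofs r = o.+1 by apply: ofs_surj; lia.
have bk : b < k by lia.
case Ht : (ty r).
- by exists (Ordinal bk), r; rewrite /Dv Ht /=; lia.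
- have [j jk Ej] := sig_surj bk.
  by exists (Ordinal jk), r; rewrite /Dv Ht /= Ej; lia.
Qed.

Lemma gen_fam_ok : fam_ok vertG p.
Proof.
split => //.
- move=> j r j' r'; rewrite !dltE.
  have R := Dv_rng r (ltn_ord j); have R' := Dv_rng r' (ltn_ord j').
  case: (sg r); case: (sg r') => E.
  + exact/tile_inj/small_inj.
  + by case: (small_anti R R' E).
  + by case: (small_anti R' R (esym E)).
  + exact/tile_inj/small_inj/oppr_inj.
- move=> j r j' r'; rewrite !dltE.
  have R := Dv_rng r (ltn_ord j); have R' := Dv_rng r' (ltn_ord j').
  case Es: (sg r); case Es': (sg r') => E.
  + exact: (small_anti R R' E).
  + move: E; rewrite opprK => /(small_inj R R') /tile_inj [_ Er].
    by move: Es Es'; rewrite Er => ->.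
  + move/oppr_inj: E => /(small_inj R R') /tile_inj [_ Er].
    by move: Es Es'; rewrite Er => ->.
  + move: E; rewrite opprK => E; exact: (small_anti R' R (esym E)).
- move=> g gn0.
  have g0 : 0 < nat_of_ord g by case: g gn0 => [[|x] Hx] // H; case: H; apply: val_inj.
  have gN := ltn_ord g.
  have [D HD Eg] : exists2 D, 0 < D <= 8 * k &
      g = inZp D \/ g = (- inZp D)%R.
    case: (leqP (nat_of_ord g) (8 * k)) => Hg.
    + exists (nat_of_ord g); first lia.
      by left; apply: ord_inj; rewrite val_inZp.
    + exists (N - nat_of_ord g); first lia.
      by right; apply: ord_inj; rewrite val_oppZp; lia.
  have [j [r Ej]] := tile_surj HD.
  exists j, r; rewrite dltE Ej.
  by case: (sg r); case: Eg => ->; rewrite ?opprK; auto.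
Qed.

End GFam.

End Gen.

End GenM.
Import GenM.

Module InstM.

Definition o8 (i : nat) : 'I_8 := inZp i.
Definition pB : 8.-tuple 'I_8 := [tuple o8 0; o8 2; o8 1; o8 3; o8 7; o8 4; o8 6; o8 5].
Definition pI : 8.-tuple 'I_8 := [tuple o8 0; o8 3; o8 6; o8 2; o8 7; o8 5; o8 1; o8 4].
Definition sgB (r : 'I_8) := nth false [:: true; false; true; true; false; true; false; false] r.
Definition tyB (r : 'I_8) := nth false [:: true; true; true; false; true; true; true; false] r.
Definition ofB (r : 'I_8) := nth 0 [:: 2; 1; 3; 6; 8; 7; 5; 4] r.
Definition sgI (r : 'I_8) := nth false [:: true; true; false; true; false; false; true; false] r.
Definition tyI (r : 'I_8) := nth false [:: true; false; false; false; true; false; false; false] r.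
Definition ofI (r : 'I_8) := nth 0 [:: 4; 5; 7; 8; 6; 3; 1; 2] r.

Lemma stepB k (j : nat) (r : 'I_8) : j < k ->
  if sgB r then Fv k (tnth pB (ordS r)) j = Fv k (tnth pB r) j + Dv k tyB ofB j r
  else Fv k (tnth pB r) j = Fv k (tnth pB (ordS r)) j + Dv k tyB ofB j r.
Proof.
move=> jk.
case: r => [[|[|[|[|[|[|[|[|//]]]]]]]] Hr]; rewrite /Fv /Dv /ofB /tyB /sgB /=; lia.
Qed.

Lemma stepI k (j : nat) (r : 'I_8) : j < k ->
  if sgI r then Fv k (tnth pI (ordS r)) j = Fv k (tnth pI r) j + Dv k tyI ofI j r
  else Fv k (tnth pI r) j = Fv k (tnth pI (ordS r)) j + Dv k tyI ofI j r.
Proof.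
move=> jk.
case: r => [[|[|[|[|[|[|[|[|//]]]]]]]] Hr]; rewrite /Fv /Dv /ofI /tyI /sgI /=; lia.
Qed.

Lemma ofB_rng r : 0 < ofB r <= 8.
Proof. by case: r => [[|[|[|[|[|[|[|[|//]]]]]]]] Hr]. Qed.
Lemma ofI_rng r : 0 < ofI r <= 8.
Proof. by case: r => [[|[|[|[|[|[|[|[|//]]]]]]]] Hr]. Qed.

Lemma ofB_inj : injective ofB.
Proof.
move=> r r'.
case: r => [[|[|[|[|[|[|[|[|//]]]]]]]] Hr];
case: r' => [[|[|[|[|[|[|[|[|//]]]]]]]] Hr']; rewrite /ofB /= => H;
  (try discriminate H); exact: ord_inj.
Qed.

Lemma ofI_inj : injective ofI.
Proof.
move=> r r'.
case: r => [[|[|[|[|[|[|[|[|//]]]]]]]] Hr];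
case: r' => [[|[|[|[|[|[|[|[|//]]]]]]]] Hr']; rewrite /ofI /= => H;
  (try discriminate H); exact: ord_inj.
Qed.

Lemma ofB_surj o : 0 < o <= 8 -> exists r, ofB r = o.
Proof.
case: o => [|[|[|[|[|[|[|[|[|o]]]]]]]]] // _.
- by exists (o8 1).
- by exists (o8 0).
- by exists (o8 2).
- by exists (o8 7).
- by exists (o8 6).
- by exists (o8 3).
- by exists (o8 5).
- by exists (o8 4).
Qed.

Lemma ofI_surj o : 0 < o <= 8 -> exists r, ofI r = o.
Proof.
case: o => [|[|[|[|[|[|[|[|[|o]]]]]]]]] // _.
- by exists (o8 6).
- by exists (o8 7).
- by exists (o8 5).
- by exists (o8 0).
- by exists (o8 1).
- by exists (o8 4).
- by exists (o8 2).
- by exists (o8 3).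
Qed.

Lemma disjBI (r r' : 'I_8) :
  ~ ((tnth pB r = tnth pI r' /\ tnth pB (ordS r) = tnth pI (ordS r')) \/
     (tnth pB r = tnth pI (ordS r') /\ tnth pB (ordS r) = tnth pI r')).
Proof.
case: r => [[|[|[|[|[|[|[|[|//]]]]]]]] Hr];
case: r' => [[|[|[|[|[|[|[|[|//]]]]]]]] Hr'];
case=> [[/(congr1 (@nat_of_ord 8)) H1 /(congr1 (@nat_of_ord 8)) H2]
       |[/(congr1 (@nat_of_ord 8)) H1 /(congr1 (@nat_of_ord 8)) H2]];
by move: H1 H2; vm_compute.
Qed.


Lemma gen_main k : 1 < k ->
  exists S : {set {set {set 'I_(16 * k).+1}}}, almost_2_perfect S.
Proof.
move=> k2.
apply: (@frame_main _ _ (@vertG k) (vertG_inj k2) pB pI).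
- apply: (gen_fam_ok k2 (sg := sgB) (ty := tyB) (ofs := ofB)) => //.
  + exact: ofB_rng.
  + exact: ofB_inj.
  + exact: ofB_surj.
  + exact: stepB.
- apply: (gen_fam_ok k2 (sg := sgI) (ty := tyI) (ofs := ofI)) => //.
  + exact: ofI_rng.
  + exact: ofI_inj.
  + exact: ofI_surj.
  + exact: stepI.
- exact: disjBI.
Qed.

End InstM.
Import InstM.

Module K17M.

Definition v17 (_ : unit) (s : 'I_8) : 'I_17 :=
  inZp (nth 0 [:: 0; 1; 3; 6; 10; 5; 16; 9] s).
Definition p17 : 8.-tuple 'I_8 := [tuple o8 0; o8 1; o8 2; o8 3; o8 4; o8 5; o8 6; o8 7].
Definition q17 : 8.-tuple 'I_8 := [tuple o8 0; o8 5; o8 3; o8 7; o8 2; o8 6; o8 1; o8 4].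

Lemma v17_inj l : injective (v17 l).
Proof.
move=> s s'.
case: s => [[|[|[|[|[|[|[|[|//]]]]]]]] Hs];
case: s' => [[|[|[|[|[|[|[|[|//]]]]]]]] Hs'] => /(congr1 (@nat_of_ord 17)) H;
vm_compute in H; (try discriminate H); exact: ord_inj.
Qed.

Lemma fam17 (p : 8.-tuple 'I_8) : uniq p ->
  (forall r r', (dlt v17 p tt r == dlt v17 p tt r') = (r == r')) ->
  (forall r r', (dlt v17 p tt r != - dlt v17 p tt r')%R) ->
  (forall g : 'I_17, g != 0%R ->
     has (fun r => (g == dlt v17 p tt r) || (g == - dlt v17 p tt r)%R)
         [seq o8 i | i <- iota 0 8]) ->
  fam_ok v17 p.
Proof.
move=> up Hi Ha Hs; split => //.
- by move=> [] r [] r' /eqP; rewrite Hi => /eqP.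
- by move=> [] r [] r' /eqP; rewrite (negbTE (Ha r r')).
- move=> g /eqP /Hs /hasP [r _ /orP [/eqP E|/eqP E]]; exists tt, r; auto.
Qed.

Ltac brute8 :=
  let r := fresh "r" in let r' := fresh "r'" in
  move=> r r';
  case: r => [[|[|[|[|[|[|[|[|//]]]]]]]] ?];
  case: r' => [[|[|[|[|[|[|[|[|//]]]]]]]] ?]; by vm_compute.

Lemma ok17p : fam_ok v17 p17.
Proof.
apply: fam17 => //.
- brute8.
- brute8.
- move=> g; case: g => [[|[|[|[|[|[|[|[|[|[|[|[|[|[|[|[|[|//]]]]]]]]]]]]]]]]] ?];
  by vm_compute.
Qed.

Lemma ok17q : fam_ok v17 q17.
Proof.
apply: fam17 => //.
- brute8.
- brute8.
- move=> g; case: g => [[|[|[|[|[|[|[|[|[|[|[|[|[|[|[|[|[|//]]]]]]]]]]]]]]]]] ?];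
  by vm_compute.
Qed.

Lemma disj17 (r r' : 'I_8) :
  ~ ((tnth p17 r = tnth q17 r' /\ tnth p17 (ordS r) = tnth q17 (ordS r')) \/
     (tnth p17 r = tnth q17 (ordS r') /\ tnth p17 (ordS r) = tnth q17 r')).
Proof.
case: r => [[|[|[|[|[|[|[|[|//]]]]]]]] Hr];
case: r' => [[|[|[|[|[|[|[|[|//]]]]]]]] Hr'];
case=> [[/(congr1 (@nat_of_ord 8)) H1 /(congr1 (@nat_of_ord 8)) H2]
       |[/(congr1 (@nat_of_ord 8)) H1 /(congr1 (@nat_of_ord 8)) H2]];
by move: H1 H2; vm_compute.
Qed.

Lemma main17 : exists S : {set {set {set 'I_17}}}, almost_2_perfect S.
Proof. exact: (@frame_main 16 _ v17 v17_inj p17 q17 ok17p ok17q disj17). Qed.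

End K17M.
Import K17M.


Theorem lemma3p1 (n : nat) :
  n %% 16 = 1 -> 17 <= n ->
  exists S : {set {set {set 'I_n}}}, almost_2_perfect S.
Proof.
move=> Hm Hn.
have [k Ek] : exists k, n = (16 * k).+1.
  by exists (n %/ 16); have := divn_eq n 16; lia.
subst n.
case: (leqP k 1) => Hk.
- have -> : k = 1 by lia.
  exact: main17.
- exact: gen_main.
Qed.
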